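(* Under the hypotheses of Theorem 1 (the closed-loop scheme of the setting below, with (i) $\mathcal P_i(0)$ feasible for all $i$ and $S_i^\ast(0)\cap S_j^\ast(0)=\emptyset$ for all $i\neq j$, (ii) nominal completion: whenever contingency variables satisfying (C1)–(C8) and (L) of $\mathcal P_i(t+1)$ exist, nominal variables exist so that (N1)–(N3) also hold, and (iii) $\ell_i^{\mathrm c}(0,0)=0$), the closed-loop execution is collision-free: $\mathcal B_i(t)\cap\mathcal B_j(t)=\emptyset$ for all $i\neq j$ and all $t\in\mathbb Z_+$.
   Context: Setting. Agents $\mathcal I=\{1,\dots,M\}$. Agent $i$ has dynamics $x_i(t+1)=f_i(x_i(t),u_i(t))$, $x_i\in\mathbb R^{n_i}$, $u_i\in\mathbb R^{m_i}$, admissible sets $\mathcal X_i\subset\mathbb R^{n_i}$, $\mathcal U_i\subset\mathbb R^{m_i}$, position $p_i=C_ix_i\in\mathbb R^{n_p}$, body radius $r_i>0$, body $\mathcal B_i(t)=\mathbb B(p_i(t),r_i)$ (closed Euclidean ball), reference state $x_i^{\mathrm{ref}}$. A deterministic safe-set generator $\Gamma_i$ assigns to each $x\in\mathcal X_i$ a ball $\Gamma_i(x)=\mathbb B(c_i(x),R_i(x))$. The active safe set at time $t$ is $S_i^\ast(t)=\mathbb B(c_i(t),R_i(t))$. $h:\mathbb R^{n_p}\to\mathbb R$ is a continuous obstacle function. Horizons $N_{\mathrm n},N_{\mathrm c}\in\mathbb Z_{>0}$. Costs: nominal stage and terminal costs $\ell_i^{\mathrm n},V_i^{\mathrm n}$,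 nonnegative offset cost $V_i^{\mathrm c}$, nonnegative contingency stage cost $\ell_i^{\mathrm c}$, weight $\gamma>0$. Problem $\mathcal P_i(t)$ (given $x_i(t)$, $S_i^\ast(t)$ and a bound $\hat J_i^{\mathrm c}(t)\ge0$): decision variables $x^{\mathrm n}_{i,(k|t)}$ ($k=0..N_{\mathrm n}$), $u^{\mathrm n}_{i,(k|t)}$ ($k=0..N_{\mathrm n}-1$), $x^{\mathrm c}_{i,(k|t)}$ ($k=0..N_{\mathrm c}$), $u^{\mathrm c}_{i,(k|t)}$ ($k=0..N_{\mathrm c}-1$), $\bar x^{\mathrm c}_i(t),\bar u^{\mathrm c}_i(t)$; write $p^\bullet_{i,(k|t)}=C_ix^\bullet_{i,(k|t)}$. Minimize $J_i=\sum_{k=0}^{N_{\mathrm n}-1}\ell_i^{\mathrm n}(x^{\mathrm n}_{i,(k|t)},u^{\mathrm n}_{i,(k|t)})+V_i^{\mathrm n}(x^{\mathrm n}_{i,(N_{\mathrm n}|t)},x_i^{\mathrm{ref}})+\gamma V_i^{\mathrm c}(\bar x^{\mathrm c}_i(t),x_i^{\mathrm{ref}})$ subject to: (N1) $x^{\mathrm n}_{i,(0|t)}=x_i(t)$; (N2) $u^{\mathrm n}_{i,(0|t)}=u^{\mathrm c}_{i,(0|t)}$; (N3) $x^{\mathrm n}_{i,(k+1|t)}=f_i(x^{\mathrm n}_{i,(k|t)},u^{\mathrm n}_{i,(k|t)})$, $x^{\mathrm n}_{i,(k+1|t)}\in\mathcal X_i$, $u^{\mathrm n}_{i,(k|t)}\in\mathcal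 U_i$ for $k=0..N_{\mathrm n}-1$; (C1) $x^{\mathrm c}_{i,(0|t)}=x_i(t)$; (C2) $x^{\mathrm c}_{i,(k+1|t)}=f_i(x^{\mathrm c}_{i,(k|t)},u^{\mathrm c}_{i,(k|t)})$ for $k=0..N_{\mathrm c}-1$; (C3) $x^{\mathrm c}_{i,(k+1|t)}\in\mathcal X_i$, $u^{\mathrm c}_{i,(k|t)}\in\mathcal U_i$ for $k=0..N_{\mathrm c}-1$; (C4) $h(p^{\mathrm c}_{i,(k|t)})\ge0$ for $k=0..N_{\mathrm c}$; (C5) $x^{\mathrm c}_{i,(N_{\mathrm c}|t)}=\bar x^{\mathrm c}_i(t)$, $\bar x^{\mathrm c}_i(t)=f_i(\bar x^{\mathrm c}_i(t),\bar u^{\mathrm c}_i(t))$, $(\bar x^{\mathrm c}_i(t),\bar u^{\mathrm c}_i(t))\in\mathcal X_i\times\mathcal U_i$; (C6) $C_i\bar x^{\mathrm c}_i(t)\in S_i^\ast(t)$; (C7) $\|p^{\mathrm c}_{i,(k|t)}-c_i(t)\|\le R_i(t)-r_i$ for $k=0..N_{\mathrm c}$; (C8) $\|p^{\mathrm c}_{i,(l|t)}-c_i(x^{\mathrm c}_{i,(k|t)})\|\le R_i(x^{\mathrm c}_{i,(k|t)})-r_i$ for all $0\le k\le l\le N_{\mathrm c}$; (L) $J_i^{\mathrm c}(t)\le\hat J_i^{\mathrm c}(t)$, where $J_i^{\mathrm c}(t):=\sum_{k=0}^{N_{\mathrm c}-1}\ell_i^{\mathrm c}(x^{\mathrm c}_{i,(k|t)}-\bar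 x^{\mathrm c}_i(t),u^{\mathrm c}_{i,(k|t)}-\bar u^{\mathrm c}_i(t))+V_i^{\mathrm c}(\bar x^{\mathrm c}_i(t),x_i^{\mathrm{ref}})$. Closed loop: at each $t$ each agent solves $\mathcal P_i(t)$, a star denotes the optimal solution, $J_i^{\mathrm c,\ast}(t)$ is $J_i^{\mathrm c}$ evaluated at it, the input $u_i(t)=u^{\mathrm c,\ast}_{i,(0|t)}=u^{\mathrm n,\ast}_{i,(0|t)}$ is applied and the state evolves exactly by $x_i(t+1)=f_i(x_i(t),u_i(t))$. Bound update: $\hat J_i^{\mathrm c}(t+1):=J_i^{\mathrm c,\ast}(t)-\ell_i^{\mathrm c}(x_i(t)-\bar x^{\mathrm c,\ast}_i(t),u_i(t)-\bar u^{\mathrm c,\ast}_i(t))$. Freeze-or-shift (FoS) update: $\tilde S_i(t+1):=\Gamma_i(x_i(t+1))$; $\chi_i(t)=1$ if some $j\neq i$ has $\tilde S_i(t+1)\cap\tilde S_j(t+1)\neq\emptyset$ or $\tilde S_i(t+1)\cap S_j^\ast(t)\neq\emptyset$, else $\chi_i(t)=0$; $S_i^\ast(t+1)=S_i^\ast(t)$ if $\chi_i(t)=1$ and $S_i^\ast(t+1)=\tilde S_i(t+1)$ if $\chi_i(t)=0$. *)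

(* Defs.v *)
From HB Require Import structures.
From mathcomp Require Import all_boot all_order all_algebra.
From mathcomp Require Import all_classical all_reals all_analysis.
Set Implicit Arguments. Unset Strict Implicit. Unset Printing Implicit Defensive.
Import Order.TTheory GRing.Theory Num.Theory.
Import numFieldNormedType.Exports.
Local Open Scope ring_scope.

Definition enorm (R : realType) (n : nat) (v : 'rV[R]_n) : R :=
  Num.sqrt (\sum_(k < n) (v ord0 k) ^+ 2).

Definition inball (R : realType) (n : nat) (c : 'rV[R]_n) (rho : R) (p : 'rV[R]_n) : Prop :=
  enorm (p - c) <= rho.

Definition balls_meet (R : realType) (n : nat) (c1 : 'rV[R]_n) (r1 : R)
  (c2 : 'rV[R]_n) (r2 : R) : Prop :=
  exists p, inball c1 r1 p /\ inball c2 r2 p.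

(* Data of one agent; positions live in R^np.  States are row vectors, so the
   position map p = C x is written x *m Cpos with Cpos : 'M_(nx, np). *)
Record agent (R : realType) (np : nat) := Agent {
  nx : nat;
  nu : nat;
  dynf : 'rV[R]_nx -> 'rV[R]_nu -> 'rV[R]_nx;
  Xadm : set 'rV[R]_nx;
  Uadm : set 'rV[R]_nu;
  Cpos : 'M[R]_(nx, np);
  body_r : R;
  xref : 'rV[R]_nx;
  gen_c : 'rV[R]_nx -> 'rV[R]_np;
  gen_R : 'rV[R]_nx -> R;
  lnom : 'rV[R]_nx -> 'rV[R]_nu -> R;
  Vnom : 'rV[R]_nx -> 'rV[R]_nx -> R;
  Voff : 'rV[R]_nx -> 'rV[R]_nx -> R;
  lcont : 'rV[R]_nx -> 'rV[R]_nu -> R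
}.

Arguments dynf {R np} a : rename. Arguments Xadm {R np} a : rename. Arguments Uadm {R np} a : rename.
Arguments Cpos {R np} a : rename. Arguments body_r {R np} a : rename. Arguments xref {R np} a : rename.
Arguments gen_c {R np} a : rename. Arguments gen_R {R np} a : rename. Arguments lnom {R np} a : rename.
Arguments Vnom {R np} a : rename. Arguments Voff {R np} a : rename. Arguments lcont {R np} a : rename.

Definition position (R : realType) (np : nat) (A : agent R np) (x : 'rV[R]_(nx A)) : 'rV[R]_np :=
  x *m Cpos A.

(* Decision variables of P_i(t); predicted sequences indexed by k : nat
   (only indices within the horizons matter). *)
Record sol (R : realType) (n m : nat) := Sol {
  xn : nat -> 'rV[R]_n;  un : nat -> 'rV[R]_m;
  xc : nat -> 'rV[R]_n;  uc : nat -> 'rV[R]_m;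
  xbar : 'rV[R]_n;       ubar : 'rV[R]_m
}.

Section Problem.
Variables (R : realType) (np : nat) (A : agent R np).
Local Notation S := (sol R (nx A) (nu A)).

Definition Jc (Nc : nat) (s : S) : R :=
  \sum_(k < Nc) lcont A (xc s k - xbar s) (uc s k - ubar s) + Voff A (xbar s) (xref A).

Definition Jobj (Nn : nat) (gamma : R) (s : S) : R :=
  \sum_(k < Nn) lnom A (xn s k) (un s k) + Vnom A (xn s Nn) (xref A)
  + gamma * Voff A (xbar s) (xref A).

(* (N1)-(N3) *)
Definition feas_n (Nn : nat) (x : 'rV[R]_(nx A)) (s : S) : Prop :=
  xn s 0 = x /\ un s 0 = uc s 0 /\
  (forall k, (k < Nn)%N ->
     xn s k.+1 = dynf A (xn s k) (un s k) /\ Xadm A (xn s k.+1) /\ Uadm A (un s k)).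

(* (C1)-(C8) and (L); the active safe set is B(c, rho) *)
Definition feas_c (Nc : nat) (h : 'rV[R]_np -> R) (x : 'rV[R]_(nx A))
  (c : 'rV[R]_np) (rho : R) (Jhat : R) (s : S) : Prop :=
  (* C1 *) xc s 0 = x /\
  (* C2 *) (forall k, (k < Nc)%N -> xc s k.+1 = dynf A (xc s k) (uc s k)) /\
  (* C3 *) (forall k, (k < Nc)%N -> Xadm A (xc s k.+1) /\ Uadm A (uc s k)) /\
  (* C4 *) (forall k, (k <= Nc)%N -> 0 <= h (position (xc s k))) /\
  (* C5 *) (xc s Nc = xbar s /\ xbar s = dynf A (xbar s) (ubar s)
            /\ Xadm A (xbar s) /\ Uadm A (ubar s)) /\
  (* C6 *) inball c rho (position (xbar s)) /\
  (* C7 *) (forall k, (k <= Nc)%N -> inball c (rho - body_r A) (position (xc s k))) /\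
  (* C8 *) (forall k l, (k <= l)%N -> (l <= Nc)%N ->
              inball (gen_c A (xc s k)) (gen_R A (xc s k) - body_r A) (position (xc s l))) /\
  (* L  *) Jc Nc s <= Jhat.

Definition feasible (Nn Nc : nat) (h : 'rV[R]_np -> R) (x : 'rV[R]_(nx A))
  (c : 'rV[R]_np) (rho : R) (Jhat : R) (s : S) : Prop :=
  feas_n Nn x s /\ feas_c Nc h x c rho Jhat s.

Definition optimal (Nn Nc : nat) (gamma : R) (h : 'rV[R]_np -> R) (x : 'rV[R]_(nx A))
  (c : 'rV[R]_np) (rho : R) (Jhat : R) (s : S) : Prop :=
  feasible Nn Nc h x c rho Jhat s /\
  forall s', feasible Nn Nc h x c rho Jhat s' -> Jobj Nn gamma s <= Jobj Nn gamma s'.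

End Problem.

Definition conflict (R : realType) (np M : nat) (A : 'I_M -> agent R np)
  (x : forall i, nat -> 'rV[R]_(nx (A i)))
  (Sc : 'I_M -> nat -> 'rV[R]_np) (SR : 'I_M -> nat -> R) (i : 'I_M) (t : nat) : Prop :=
  exists j : 'I_M, j != i /\
    (balls_meet (gen_c (A i) (x i t.+1)) (gen_R (A i) (x i t.+1))
                (gen_c (A j) (x j t.+1)) (gen_R (A j) (x j t.+1))
     \/ balls_meet (gen_c (A i) (x i t.+1)) (gen_R (A i) (x i t.+1)) (Sc j t) (SR j t)).

(* Main.v *)
Require Import Defs.
From HB Require Import structures.
From mathcomp Require Import all_boot all_order all_algebra.
From mathcomp Require Import all_classical all_reals all_analysis.
From mathcomp Require Import ring lra.
Import Order.TTheory GRing.Theory Num.Theory.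
Import numFieldNormedType.Exports.
Local Open Scope ring_scope.

Lemma cs_ineq (R : realType) n (a b : 'I_n -> R) :
  (\sum_k a k * b k) ^+ 2 <= (\sum_k a k ^+ 2) * (\sum_k b k ^+ 2).
Proof.
pose A := \sum_k a k ^+ 2; pose B := \sum_k b k ^+ 2; pose S := \sum_k a k * b k.
have B0 : 0 <= B by apply: sumr_ge0 => k _; apply: sqr_ge0.
have e : \sum_k (B * a k - S * b k) ^+ 2 = B ^+ 2 * A - (2 * B * S) * S + S ^+ 2 * B.
  rewrite (eq_bigr (fun k => B ^+ 2 * a k ^+ 2 - (2 * B * S) * (a k * b k) + S ^+ 2 * b k ^+ 2)); last by move=> k _; ring.
  by rewrite big_split /= sumrB -!mulr_sumr.
have key : 0 <= B * (A * B - S ^+ 2).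
  have : 0 <= \sum_k (B * a k - S * b k) ^+ 2 by apply: sumr_ge0 => k _; apply: sqr_ge0.
  rewrite e => H. have -> : B * (A * B - S ^+ 2) = B ^+ 2 * A - (2 * B * S) * S + S ^+ 2 * B by ring.
  done.
rewrite -/A -/B -/S.
have [Bp|] := ltrP 0 B.
  move: key; rewrite pmulr_rge0 // subr_ge0 => H; lra.
move=> Ble; have Bz : B = 0 by apply/eqP; rewrite eq_le Ble B0.
have bz : forall k, b k = 0.
  move=> k; have := @psumr_eq0P _ _ xpredT (fun k => b k ^+ 2) (fun k _ => sqr_ge0 (b k)) Bz k isT.
  by move/eqP; rewrite sqrf_eq0 => /eqP.
have -> : S = 0 by rewrite /S big1 // => k _; rewrite bz mulr0.
rewrite Bz; lra.
Qed.

Lemma enorm_ge0 (R : realType) n (v : 'rV[R]_n) : 0 <= enorm v.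
Proof. exact: sqrtr_ge0. Qed.

Lemma enorm_triangle (R : realType) n (u v : 'rV[R]_n) :
  enorm (u + v) <= enorm u + enorm v.
Proof.
rewrite /enorm.
pose A := \sum_(k < n) u ord0 k ^+ 2; pose B := \sum_(k < n) v ord0 k ^+ 2.
pose S := \sum_(k < n) u ord0 k * v ord0 k.
have A0 : 0 <= A by apply: sumr_ge0 => k _; apply: sqr_ge0.
have B0 : 0 <= B by apply: sumr_ge0 => k _; apply: sqr_ge0.
have e : \sum_(k < n) (u + v) ord0 k ^+ 2 = A + 2 * S + B.
  rewrite (eq_bigr (fun k => u ord0 k ^+ 2 + 2 * (u ord0 k * v ord0 k) + v ord0 k ^+ 2)); last by move=> k _; rewrite mxE; ring.
  by rewrite !big_split /= -mulr_sumr.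
rewrite e -/A -/B.
have cs := @cs_ineq R n (fun k => u ord0 k) (fun k => v ord0 k).
rewrite -/A -/B -/S in cs.
have sA := sqrtr_ge0 A; have sB := sqrtr_ge0 B.
have qA := sqr_sqrtr A0; have qB := sqr_sqrtr B0.
have P0 : 0 <= Num.sqrt A * Num.sqrt B by apply: mulr_ge0.
have PS : S <= Num.sqrt A * Num.sqrt B.
  have : S ^+ 2 <= (Num.sqrt A * Num.sqrt B) ^+ 2 by rewrite exprMn qA qB.
  nra.
have -> : Num.sqrt A + Num.sqrt B = Num.sqrt ((Num.sqrt A + Num.sqrt B) ^+ 2).
  by rewrite sqrtr_sqr ger0_norm // addr_ge0.
rewrite ler_sqrt; last by apply: sqr_ge0.
rewrite sqrrD qA qB. lra.
Qed.

Lemma ball_sub (R : realType) n (c pos p : 'rV[R]_n) (rho r : R) :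
  inball c (rho - r) pos -> inball pos r p -> inball c rho p.
Proof.
rewrite /inball => H1 H2.
have -> : p - c = (p - pos) + (pos - c) by rewrite addrA subrK.
apply: le_trans (@enorm_triangle R n _ _) _. lra.
Qed.
Lemma shift_feas (R : realType) (np : nat) (A : agent R np) (Nc : nat) h
  (x0 : 'rV[R]_(nx A)) c rho J (s : sol R (nx A) (nu A)) c' rho' xn' un' :
  (0 < Nc)%N -> lcont A 0 0 = 0 -> feas_c Nc h x0 c rho J s ->
  inball c' rho' (position (xbar s)) ->
  (forall k, (k <= Nc)%N -> inball c' (rho' - body_r A)
       (position (if (k < Nc)%N then xc s k.+1 else xbar s))) ->
  feas_c Nc h (dynf A x0 (uc s 0)) c' rho'
    (Jc Nc s - lcont A (x0 - xbar s) (uc s 0 - ubar s))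
    (Sol xn' un' (fun k => if (k < Nc)%N then xc s k.+1 else xbar s)
       (fun k => if (k.+1 < Nc)%N then uc s k.+1 else ubar s) (xbar s) (ubar s)).
Proof.
move=> Ncp l00 [C1 [C2 [C3 [C4 [[C5a [C5b [C5c C5d]]] [C6 [C7 [C8 CL]]]]]]]] H6 H7.
have xsE : forall k, (if (k < Nc)%N then xc s k.+1 else xbar s) =
    xc s (if (k < Nc)%N then k.+1 else Nc).
  by move=> k; case: ifP => // _; rewrite C5a.
rewrite /feas_c /=.
split; first by rewrite Ncp -C1; apply: C2.
split.
  move=> k kN; rewrite kN; case: ifP => h1.
    by apply: C2.
  have eN : k.+1 = Nc by apply/eqP; rewrite eqn_leq kN leqNgt h1.
  by rewrite eN C5a.
split.
  move=> k kN; case: ifP => h1.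
    by apply: C3.
  by [].
split.
  move=> k kN; rewrite xsE; apply: C4; case: ifP => //.
split; first by rewrite ltnn.
split; first exact: H6.
split; first exact: H7.
split.
  move=> k l kl lN; rewrite !xsE; apply: C8.
    case: ifP => hk; case: ifP => hl //.
    by move: (leq_ltn_trans kl hl); rewrite hk.
  by case: ifP.
rewrite le_eqVlt; apply/orP; left; apply/eqP.
rewrite -C1 /Jc /=.
case: Nc Ncp C5a {C2 C3 C4 C6 C7 C8 H7 xsE CL} => // N _ C5a.
rewrite big_ord_recr big_ord_recl /= ltnSn ltnn C5a !subrr l00 addr0.
rewrite (eq_bigr (fun i : 'I_N => lcont A (xc s (bump 0 i) - xbar s) (uc s (bump 0 i) - ubar s))).
  by ring.
move=> k _; rewrite /bump /= add1n.
have k1 : (k < N.+1)%N by apply: ltnW; rewrite ltnS.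
by rewrite k1 ltnS (ltn_ord k).
Qed.

Lemma meet_sym (R : realType) n (c1 c2 : 'rV[R]_n) r1 r2 :
  balls_meet c1 r1 c2 r2 -> balls_meet c2 r2 c1 r1.
Proof. by case=> p [H1 H2]; exists p. Qed.

Theorem theorem2 (R : realType) (np M : nat) (A : 'I_M -> agent R np)
  (h : 'rV[R]_np -> R) (Nn Nc : nat) (gamma : R)
  (x : forall i, nat -> 'rV[R]_(nx (A i)))
  (Sc : 'I_M -> nat -> 'rV[R]_np) (SR : 'I_M -> nat -> R)
  (Jhat : 'I_M -> nat -> R)
  (s : forall i, nat -> sol R (nx (A i)) (nu (A i))) :
  (* standing assumptions *)
  continuous h -> (0 < Nn)%N -> (0 < Nc)%N -> 0 < gamma ->
  (forall i, 0 < body_r (A i)) ->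
  (forall i a b, 0 <= Voff (A i) a b) ->
  (forall i a b, 0 <= lcont (A i) a b) ->
  (forall i, 0 <= Jhat i 0) ->
  (* closed loop: the applied solution is an optimal solution of P_i(t) *)
  (forall i t, (exists s', feasible Nn Nc h (x i t) (Sc i t) (SR i t) (Jhat i t) s') ->
     optimal Nn Nc gamma h (x i t) (Sc i t) (SR i t) (Jhat i t) (s i t)) ->
  (forall i t, x i t.+1 = dynf (A i) (x i t) (uc (s i t) 0)) ->
  (forall i t, Jhat i t.+1 = Jc Nc (s i t)
      - lcont (A i) (x i t - xbar (s i t)) (uc (s i t) 0 - ubar (s i t))) ->
  (* freeze-or-shift update *)
  (forall i t, conflict x Sc SR i t -> Sc i t.+1 = Sc i t /\ SR i t.+1 = SR i t) ->
  (forall i t, ~ conflict x Sc SR i t ->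
     Sc i t.+1 = gen_c (A i) (x i t.+1) /\ SR i t.+1 = gen_R (A i) (x i t.+1)) ->
  (* (i) *)
  (forall i, exists s', feasible Nn Nc h (x i 0) (Sc i 0) (SR i 0) (Jhat i 0) s') ->
  (forall i j, i != j -> ~ balls_meet (Sc i 0) (SR i 0) (Sc j 0) (SR j 0)) ->
  (* (ii) nominal completion *)
  (forall i t (s' : sol R (nx (A i)) (nu (A i))),
     feas_c Nc h (x i t.+1) (Sc i t.+1) (SR i t.+1) (Jhat i t.+1) s' ->
     exists xn' un', feas_n Nn (x i t.+1)
        (Sol xn' un' (xc s') (uc s') (xbar s') (ubar s'))) ->
  (* (iii) *)
  (forall i, lcont (A i) 0 0 = 0) ->
  (* collision freedom *)
  forall t (i j : 'I_M), i != j ->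
    ~ balls_meet (position (x i t)) (body_r (A i)) (position (x j t)) (body_r (A j)).
Proof.
move=> _ _ Ncp _ rp _ _ _ Hopt Hdyn HJ Hfr Hsh Hf0 Hd0 Hcomp Hl0.
have Inv : forall t,
  (forall i, exists s', feasible Nn Nc h (x i t) (Sc i t) (SR i t) (Jhat i t) s') /\
  (forall i j, i != j -> ~ balls_meet (Sc i t) (SR i t) (Sc j t) (SR j t)).
  elim=> [|t [Ft Dt]]; first by split.
  have Fs : forall i, feasible Nn Nc h (x i t) (Sc i t) (SR i t) (Jhat i t) (s i t).
    by move=> i; case: (Hopt i t (Ft i)).
  split.
    move=> i; have [_ Fc] := Fs i.
    have Fc0 := Fc.
    move: Fc0 => [C1 [C2 [C3 [C4 [[C5a _] [C6 [C7 [C8 CL]]]]]]]].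
    have xs1 : x i t.+1 = xc (s i t) 1 by rewrite Hdyn C2 // C1.
    have Hfc : feas_c Nc h (x i t.+1) (Sc i t.+1) (SR i t.+1) (Jhat i t.+1)
       (Sol (xn (s i t)) (un (s i t))
          (fun k => if (k < Nc)%N then xc (s i t) k.+1 else xbar (s i t))
          (fun k => if (k.+1 < Nc)%N then uc (s i t) k.+1 else ubar (s i t))
          (xbar (s i t)) (ubar (s i t))).
      rewrite {1}Hdyn HJ.
      have [ci|nci] := pselect (conflict x Sc SR i t).
        have [-> ->] := Hfr i t ci.
        apply: (shift_feas _ _ _ _ _ _ _ _ _ _ _ _ _ _ Ncp (Hl0 i) Fc); first exact: C6.
        move=> k kN; case: ifP => hk; first exact: C7.
        by rewrite -C5a; apply: C7.
      have [-> ->] := Hsh i t nci.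
      apply: (shift_feas _ _ _ _ _ _ _ _ _ _ _ _ _ _ Ncp (Hl0 i) Fc).
        rewrite xs1 -C5a; have := C8 1%N Nc Ncp (leqnn _).
        rewrite /inball => H; apply: le_trans H _; rewrite gerBl; exact: ltW (rp i).
      move=> k kN; rewrite xs1; case: ifP => hk.
        by apply: C8.
      by rewrite -C5a; apply: C8.
    have [xn' [un' Hn]] := Hcomp i t _ Hfc.
    exists (Sol xn' un' (fun k => if (k < Nc)%N then xc (s i t) k.+1 else xbar (s i t)) (fun k => if (k.+1 < Nc)%N then uc (s i t) k.+1 else ubar (s i t)) (xbar (s i t)) (ubar (s i t))).
    by split; [exact: Hn | exact: Hfc].
  move=> i j ij.
  have ji : j != i by rewrite eq_sym.
  have [ci|nci] := pselect (conflict x Sc SR i t);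
  have [cj|ncj] := pselect (conflict x Sc SR j t).
  - by have [-> ->] := Hfr i t ci; have [-> ->] := Hfr j t cj; apply: Dt.
  - have [-> ->] := Hfr i t ci; have [-> ->] := Hsh j t ncj.
    by move=> /meet_sym Hm; apply: ncj; exists i; split => //; right.
  - have [-> ->] := Hsh i t nci; have [-> ->] := Hfr j t cj.
    by move=> Hm; apply: nci; exists j; split => //; right.
  - have [-> ->] := Hsh i t nci; have [-> ->] := Hsh j t ncj.
    by move=> Hm; apply: nci; exists j; split => //; left.
move=> t i j ij [p [pi pj]].
have [Ft Dt] := Inv t.
have inS : forall k, inball (Sc k t) (SR k t - body_r (A k)) (position (x k t)).
  move=> k; have [_ [C1 [_ [_ [_ [_ [_ [C7 _]]]]]]]] := (Hopt k t (Ft k)).1.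
  by rewrite -C1; apply: C7.
apply: (Dt i j ij); exists p; split.
  exact: ball_sub _ _ _ _ _ _ _ (inS i) pi.
exact: ball_sub _ _ _ _ _ _ _ (inS j) pj.
Qed.
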